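(* Let $(M,g)$ be a $d$-dimensional Lorentzian manifold with $d\ge 4$, $p\in M$, and $\{\ell,n,m^3,\dots,m^d\}$ a null frame at $p$. Suppose the Weyl tensor $C$ at $p$ is invariant under the subgroup of the Lorentz group that fixes $\ell$ and $n$ and acts as $SO(d-2)$, in its standard representation, on $\mathrm{span}\{m^3,\dots,m^d\}$. Consider the Weyl operator $\mathsf C$ on bivectors at $p$, $(\mathsf C F)^{\mu\nu}=\tfrac12 C^{\mu\nu}{}_{\alpha\beta}F^{\alpha\beta}$. Then the eigenvalues of $\mathsf C$ (with multiplicities) are: (i) if $d=4$: $-\tfrac14(\bar R+2iA_{34})$ and $-\tfrac14(\bar R-2iA_{34})$, each with multiplicity $2$, and $\tfrac12(\bar R+2iA_{34})$, $\tfrac12(\bar R-2iA_{34})$, each with multiplicity $1$; (ii) if $d>4$: $-\frac{1}{2(d-2)}\bar R$ with multiplicity $2(d-2)$, $\tfrac12\bar R$ with multiplicity $1$, and $\frac{1}{(d-2)(d-3)}\bar R$ with multiplicity $\tfrac{(d-2)(d-3)}{2}$.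
   Context: Null frame convention: $g=2\,\ell\, n+\delta_{ij}m^im^j$, i.e. $g(\ell,n)=1$, $g(m^i,m^j)=\delta_{ij}$, all other products zero. Frame indices: $0$ refers to $\ell$, $1$ to $n$, $i,j,k\in\{3,\dots,d\}$ to the $m^i$. $C_{abcd}$ are the frame components of the Weyl tensor. Define $\bar R_{ij}=\sum_k C_{kikj}$, $\bar R=\sum_i\bar R_{ii}$, and $A_{34}=C_{0134}$ (the frame component with indices $\ell,n,m^3,m^4$). *)

(* Defs.v *)
From HB Require Import structures.
From mathcomp Require Import all_boot all_order all_algebra.
From mathcomp Require Import complex.
Set Implicit Arguments. Unset Strict Implicit. Unset Printing Implicit Defensive.
Import Order.TTheory GRing.Theory Num.Theory.
Local Open Scope ring_scope.

(* Null frame {l, n, m^3, ..., m^d} at p, indexed by 'I_d: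
   index 0 = l, index 1 = n, index k >= 2 = m^(k+1).
   All tensors are given by their frame components. *)

Section WeylDefs.
Variables (R : rcfType) (d : nat).

(* Frame components of the metric g = 2 l n + sum_i m^i m^i;
   g(l,n) = 1, g(m^i,m^j) = delta_ij, others 0.  The inverse metric
   g^{ab} has the same components. *)
Definition fg (a b : 'I_d) : R :=
  (if (a < 2)%N && (b < 2)%N then a != b else a == b)%:R.

Definition fgmx : 'M[R]_d := \matrix_(a, b) fg a b.

(* frame components C_{abce} (all indices down) of an algebraic Weyl tensor *)
Definition is_weyl (C : 'I_d -> 'I_d -> 'I_d -> 'I_d -> R) : Prop :=
  [/\ forall a b c e, C a b c e = - C b a c e,
      forall a b c e, C a b c e = - C a b e c,
      forall a b c e, C a b c e = C c e a b,
      forall a b c e, C a b c e + C a c e b + C a e b c = 0 &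
      forall a c, \sum_b \sum_e fg b e * C a b c e = 0].

(* Lorentz transformations (frame matrix L: Lambda e_b = sum_a L a b e_a)
   fixing l and n and acting on span{m^i} with determinant 1, i.e. as SO(d-2). *)
Definition spin_rot (L : 'M[R]_d) : Prop :=
  [/\ forall a b : 'I_d, (b < 2)%N -> L a b = (a == b)%:R,
      L^T *m fgmx *m L = fgmx &
      \det L = 1].

Definition spin_invariant (C : 'I_d -> 'I_d -> 'I_d -> 'I_d -> R) : Prop :=
  forall L, spin_rot L -> forall a b c e,
    \sum_f \sum_g \sum_h \sum_k L f a * L g b * L h c * L k e * C f g h k
    = C a b c e.

Definition Rbar_ij (C : 'I_d -> 'I_d -> 'I_d -> 'I_d -> R) (i j : 'I_d) : R :=
  \sum_(k : 'I_d | (2 <= k)%N) C k i k j.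
Definition Rbar (C : 'I_d -> 'I_d -> 'I_d -> 'I_d -> R) : R :=
  \sum_(i : 'I_d | (2 <= i)%N) Rbar_ij C i i.

Definition Craise (C : 'I_d -> 'I_d -> 'I_d -> 'I_d -> R) (a b c e : 'I_d) : R :=
  \sum_f \sum_h fg a f * fg b h * C f h c e.

(* basis of bivectors: e_a /\ e_b with a < b; a bivector F has
   coordinates F^{ab} (a < b), with F^{ba} = - F^{ab}, F^{aa} = 0 *)
Definition biv := {p : 'I_d * 'I_d | (p.1 < p.2)%N}.

(* (C F)^{ab} = 1/2 C^{ab}_{ce} F^{ce}
             = sum_{c<e} 1/2 (C^{ab}_{ce} - C^{ab}_{ec}) F^{ce} *)
Definition weyl_entry (C : 'I_d -> 'I_d -> 'I_d -> 'I_d -> R) (p q : biv) : R :=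
  (Craise C (val p).1 (val p).2 (val q).1 (val q).2
   - Craise C (val p).1 (val p).2 (val q).2 (val q).1) / 2.

Definition weyl_op (C : 'I_d -> 'I_d -> 'I_d -> 'I_d -> R) : 'M[R]_#|{: biv}| :=
  \matrix_(i, j) weyl_entry C (enum_val i) (enum_val j).

End WeylDefs.

(* Main.v *)
Require Import Defs.
From HB Require Import structures.
From mathcomp Require Import all_boot all_order all_algebra all_fingroup.
From mathcomp Require Import complex.
From mathcomp Require Import ring lra zify.
Set Implicit Arguments. Unset Strict Implicit. Unset Printing Implicit Defensive.
Import Order.TTheory GRing.Theory Num.Theory.
Local Open Scope ring_scope.

Section Gen.
Variables (R : rcfType) (n : nat).
Local Notation d := n.+2.
Definition o0 : 'I_d := ord0.
Definition o1 : 'I_d := @Ordinal d 1 isT.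
Definition rho (a : 'I_d) : 'I_d := if a == o0 then o1 else if a == o1 then o0 else a.

Lemma fg_rho (a f : 'I_d) : fg R a f = (f == rho a)%:R.
Proof.
rewrite /fg /rho; case: a f => [[|[|a]] Ha] [[|[|f]] Hf] //=.
by rewrite eq_sym.
Qed.

Lemma sum_only (y : 'I_d) (F : 'I_d -> R) :
  (forall h, h != y -> F h = 0) -> \sum_h F h = F y.
Proof. by move=> H; rewrite (bigD1 y) //= big1 ?addr0 // => h /H. Qed.

Lemma sum_fg (a : 'I_d) (F : 'I_d -> R) : \sum_f fg R a f * F f = F (rho a).
Proof.
rewrite (@sum_only (rho a)) ?fg_rho ?eqxx ?mul1r // => h /negbTE H.
by rewrite fg_rho H mul0r.
Qed.


Definition sgnm (m a : 'I_d) : R := if a == m then -1 else 1.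
Definition Lrot (k m : 'I_d) : 'M[R]_d :=
  \matrix_(f, a) if f == tperm k m a then sgnm m a else 0.

Lemma tperm_lt2 (k m a : 'I_d) : (2 <= k)%N -> (2 <= m)%N ->
  (tperm k m a < 2)%N = (a < 2)%N.
Proof.
move=> Hk Hm.
have Fk : (k < 2)%N = false by rewrite ltnNge Hk.
have Fm : (m < 2)%N = false by rewrite ltnNge Hm.
by case: tpermP => [->|->|//]; rewrite Fk Fm.
Qed.

Lemma fg_tperm (k m a b : 'I_d) : (2 <= k)%N -> (2 <= m)%N ->
  fg R (tperm k m a) (tperm k m b) = fg R a b.
Proof.
by move=> Hk Hm; rewrite /fg !tperm_lt2 // (inj_eq perm_inj).
Qed.

Lemma sgnm_sq (m a : 'I_d) : sgnm m a * sgnm m a = 1.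
Proof. by rewrite /sgnm; case: ifP; rewrite ?mulrNN mulr1. Qed.

Lemma Lrot_spin (k m : 'I_d) : (2 <= k)%N -> (2 <= m)%N -> k != m ->
  spin_rot (Lrot k m).
Proof.
move=> Hk Hm Hkm; split.
- move=> a b Hb; rewrite mxE tpermD; last first.
    by apply/eqP=> E; move: Hb; rewrite -E ltnNge Hm.
    by apply/eqP=> E; move: Hb; rewrite -E ltnNge Hk.
  rewrite /sgnm; have -> : (b == m) = false.
    by apply/eqP=> E; move: Hb; rewrite E ltnNge Hm.
  by case: (a == b).
- apply/matrixP=> a b; rewrite !mxE.
  rewrite (@sum_only (tperm k m b)); last first.
    by move=> h Hh; rewrite !mxE (negbTE Hh) mulr0.
  rewrite !mxE eqxx.
  rewrite (@sum_only (tperm k m a)); last first.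
    by move=> h Hh; rewrite !mxE (negbTE Hh) mul0r.
  rewrite !mxE eqxx fg_tperm //.
  have Fm : (m < 2)%N = false by rewrite ltnNge Hm.
  rewrite /fg /sgnm; case: (a =P m) => [->|Ham]; case: (b =P m) => [->|Hbm].
  + by rewrite Fm eqxx mulN1r mulrN1 opprK.
  + rewrite Fm /=; have -> : (m == b) = false by apply/eqP=> E; apply: Hbm.
    by rewrite mulr0 mul0r.
  + rewrite Fm andbF; have -> : (a == m) = false by apply/eqP.
    by rewrite mulr0 mul0r.
  + by rewrite mul1r mulr1.
- have -> : Lrot k m = perm_mx (tperm k m) *m diag_mx (\row_a sgnm m a).
    apply/matrixP=> f a; rewrite mul_mx_diag !mxE.
    have -> : (tperm k m f == a) = (f == tperm k m a).
      by rewrite -{1}(tpermK k m a) (inj_eq perm_inj).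
    by case: ifP; rewrite ?mul1r ?mul0r.
  rewrite det_mulmx det_perm det_diag odd_tperm Hkm expr1.
  rewrite (bigD1 m) //= big1 ?mulr1; last first.
    by move=> i Hi; rewrite mxE /sgnm (negbTE Hi).
  by rewrite mxE /sgnm eqxx mulrNN mulr1.
Qed.


Definition sp (i : 'I_n) : 'I_d := lift ord0 (lift ord0 i).

Lemma sp_val i : nat_of_ord (sp i) = i.+2. Proof. by []. Qed.

Lemma sum_d (F : 'I_d -> R) : \sum_b F b = F o0 + F o1 + \sum_(i < n) F (sp i).
Proof.
rewrite !big_ord_recl addrA; congr (_ + _ + _).
by congr F; apply: val_inj.
Qed.

Lemma sum_sp (F : 'I_d -> R) :
  \sum_(i : 'I_d | (2 <= i)%N) F i = \sum_(i < n) F (sp i).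
Proof. by rewrite big_mkcond sum_d /= !add0r. Qed.

Lemma rho_sp i : rho (sp i) = sp i.
Proof. by rewrite /rho. Qed.
Lemma rho0 : rho o0 = o1. Proof. by []. Qed.
Lemma rho1 : rho o1 = o0. Proof. by []. Qed.


Lemma lt2_neq (t k : 'I_d) : (t < 2)%N -> (2 <= k)%N -> (k != t) && (t != k).
Proof.
move=> Ht Hk; have H : k != t by apply/eqP=> E; move: Ht; rewrite -E ltnNge Hk.
by rewrite H eq_sym H.
Qed.

Lemma tfix (k m x : 'I_d) : k != x -> m != x -> tperm k m x = x /\ sgnm m x = 1.
Proof.
move=> H1 H2; split; first by rewrite tpermD.
by rewrite /sgnm eq_sym (negbTE H2).
Qed.

Lemma sg_k (k m : 'I_d) : k != m -> sgnm m k = 1.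
Proof. by move=> H; rewrite /sgnm (negbTE H). Qed.
Lemma sg_m (m : 'I_d) : sgnm m m = -1.
Proof. by rewrite /sgnm eqxx. Qed.

Ltac fixes :=
  rewrite ?tpermL ?tpermR; repeat (rewrite tpermD; [|by []|by []]);
  rewrite ?sg_m; repeat (rewrite sg_k; last by []).


Lemma sp_eq (i j : 'I_n) : (sp i == sp j) = (i == j).
Proof. by rewrite /sp !(inj_eq lift_inj). Qed.
Lemma sp_lt (i j : 'I_n) : (sp i < sp j)%N = (i < j)%N.
Proof. by []. Qed.
Lemma sp_ge2 (i : 'I_n) : (2 <= sp i)%N. Proof. by []. Qed.
Lemma o0_sp i : (o0 == sp i) = false. Proof. by []. Qed.
Lemma o1_sp i : (o1 == sp i) = false. Proof. by []. Qed.
Lemma sp_o0 i : (sp i == o0) = false. Proof. by []. Qed.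
Lemma sp_o1 i : (sp i == o1) = false. Proof. by []. Qed.
Lemma sp_neq (i j : 'I_n) : i != j -> sp i != sp j.
Proof. by rewrite sp_eq. Qed.

Lemma split_d (x : 'I_d) : [\/ x = o0, x = o1 | exists i, x = sp i].
Proof.
case: x => [[|[|x]] Hx].
- by apply: Or31; apply: val_inj.
- by apply: Or32; apply: val_inj.
- apply: Or33; have Hx' : (x < n)%N by [].
  by exists (Ordinal Hx'); apply: val_inj.
Qed.

Lemma classify (a b : 'I_d) : (a < b)%N ->
  [\/ a = o0 /\ b = o1, exists i : 'I_n, a = o0 /\ b = sp i,
      exists i : 'I_n, a = o1 /\ b = sp i |
      exists (i j : 'I_n), [/\ (i < j)%N, a = sp i & b = sp j]].
Proof.
case: (split_d a) => [->|->|[i ->]]; case: (split_d b) => [->|->|[j ->]] //.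
- by move=> _; apply: Or41.
- by move=> _; apply: Or42; exists j.
- by move=> _; apply: Or43; exists j.
- by move=> Hij; apply: Or44; exists i, j.
Qed.


Lemma fresh2 (i j : 'I_n) : (2 < n)%N -> exists y : 'I_n, (y != i) && (y != j).
Proof.
move=> Hn.
pose y := if (nat_of_ord i != 0%N) && (nat_of_ord j != 0%N) then 0%N
          else if (nat_of_ord i != 1%N) && (nat_of_ord j != 1%N) then 1%N else 2%N.
have Hy : (y < n)%N by rewrite /y; case: ifP => _; [|case: ifP => _]; lia.
exists (Ordinal Hy); rewrite -!val_eqE /= /y.
case: ifP => H1; [|case: ifP => H2]; lia.
Qed.

Variable C : 'I_d -> 'I_d -> 'I_d -> 'I_d -> R.

Lemma Craise_rho a b c e : Craise C a b c e = C (rho a) (rho b) c e.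
Proof.
rewrite /Craise.
under eq_bigr => f _ do under eq_bigr => h _ do rewrite -mulrA.
under eq_bigr => f _ do rewrite -mulr_sumr sum_fg.
by rewrite sum_fg.
Qed.


Hypothesis HC : is_weyl C.
Hypothesis HI : spin_invariant C.

Lemma CA1 a b c e : C a b c e = - C b a c e. Proof. by case: HC. Qed.
Lemma CA2 a b c e : C a b c e = - C a b e c. Proof. by case: HC. Qed.
Lemma CP a b c e : C a b c e = C c e a b. Proof. by case: HC. Qed.
Lemma CB a b c e : C a b c e + C a c e b + C a e b c = 0. Proof. by case: HC. Qed.
Lemma CT a c : \sum_b \sum_e fg R b e * C a b c e = 0. Proof. by case: HC. Qed.

Lemma C_aa a c e : C a a c e = 0.
Proof. have := CA1 a a c e; lra. Qed.
Lemma C_cc a b c : C a b c c = 0.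
Proof. have := CA2 a b c c; lra. Qed.

Lemma weyl_entry_rho (p q : biv d) :
  weyl_entry C p q = C (rho (val p).1) (rho (val p).2) (val q).1 (val q).2.
Proof.
rewrite /weyl_entry !Craise_rho (CA2 _ _ (val q).2); lra.
Qed.

Lemma rot_inv (k m : 'I_d) : (2 <= k)%N -> (2 <= m)%N -> k != m ->
  forall a b c e, C a b c e = sgnm m a * sgnm m b * sgnm m c * sgnm m e *
    C (tperm k m a) (tperm k m b) (tperm k m c) (tperm k m e).
Proof.
move=> Hk Hm Hkm a b c e.
rewrite -(HI (Lrot_spin Hk Hm Hkm) a b c e).
rewrite (@sum_only (tperm k m a)); last first.
  move=> f Hf; apply: big1 => g _; apply: big1 => h _; apply: big1 => q _.
  by rewrite !mxE (negbTE Hf) !(mulr0, mul0r).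
rewrite (@sum_only (tperm k m b)); last first.
  move=> f Hf; apply: big1 => h _; apply: big1 => q _.
  by rewrite !mxE (negbTE Hf) !(mulr0, mul0r).
rewrite (@sum_only (tperm k m c)); last first.
  move=> f Hf; apply: big1 => q _.
  by rewrite !mxE (negbTE Hf) !(mulr0, mul0r).
rewrite (@sum_only (tperm k m e)); last first.
  by move=> f Hf; rewrite !mxE (negbTE Hf) !(mulr0, mul0r).
by rewrite !mxE !eqxx.
Qed.

Definition par (k m x : 'I_d) : R := if (x == k) || (x == m) then -1 else 1.

Lemma sgn_par (k m x : 'I_d) : k != m ->
  sgnm m x * sgnm m (tperm k m x) = par k m x.
Proof.
move=> Hkm; rewrite /sgnm /par; case: tpermP => [->|->|H1 H2].
- rewrite !eqxx (negbTE Hkm) /=; lra.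
- rewrite !eqxx orbT (negbTE Hkm); lra.
- have /negbTE -> : x != k by apply/eqP.
  have /negbTE -> : x != m by apply/eqP.
  by rewrite mulr1.
Qed.

Lemma parity (k m : 'I_d) : (2 <= k)%N -> (2 <= m)%N -> k != m ->
  forall a b c e, C a b c e = par k m a * par k m b * par k m c * par k m e * C a b c e.
Proof.
move=> Hk Hm Hkm a b c e.
rewrite {1}(rot_inv Hk Hm Hkm) (rot_inv Hk Hm Hkm (tperm k m a)) !tpermK.
rewrite -!(sgn_par _ Hkm); ring.
Qed.

Lemma par_kill (k m : 'I_d) a b c e : (2 <= k)%N -> (2 <= m)%N -> k != m ->
  par k m a * par k m b * par k m c * par k m e = -1 -> C a b c e = 0.
Proof.
move=> Hk Hm Hkm H; have := parity Hk Hm Hkm a b c e; rewrite H; lra.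
Qed.


Lemma trace_eq a c :
  C a o0 c o1 + C a o1 c o0 + \sum_(i < n) C a (sp i) c (sp i) = 0.
Proof.
rewrite -[RHS](CT a c); under [RHS]eq_bigr => b _ do rewrite sum_fg.
rewrite sum_d; congr (_ + _ + _); apply: eq_bigr => i _; by rewrite rho_sp.
Qed.

Lemma Rbar_sp : Rbar C = \sum_(i < n) \sum_(k < n) C (sp k) (sp i) (sp k) (sp i).
Proof.
rewrite /Rbar sum_sp; apply: eq_bigr => i _; by rewrite /Rbar_ij sum_sp.
Qed.


Lemma rot_tt (t t' k m : 'I_d) : (t < 2)%N -> (t' < 2)%N -> (2 <= k)%N -> (2 <= m)%N ->
  k != m -> C t k t' k = C t m t' m.
Proof.
move=> Ht Ht' Hk Hm Hkm.
have /andP[H1 H2] := lt2_neq Ht Hk; have /andP[H3 H4] := lt2_neq Ht Hm.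
have /andP[H5 H6] := lt2_neq Ht' Hk; have /andP[H7 H8] := lt2_neq Ht' Hm.
rewrite (rot_inv Hk Hm Hkm); fixes; lra.
Qed.


Lemma rot_tt0 (t k m : 'I_d) : (t < 2)%N -> (2 <= k)%N -> (2 <= m)%N ->
  k != m -> C t k t m = 0.
Proof.
move=> Ht Hk Hm Hkm.
have /andP[H1 H2] := lt2_neq Ht Hk; have /andP[H3 H4] := lt2_neq Ht Hm.
have Hmk : m != k by rewrite eq_sym.
have := rot_inv Hk Hm Hkm t k t m; fixes; rewrite (CP t m t k); lra.
Qed.

Lemma rot_ijij (i j k : 'I_d) : (2 <= i)%N -> (2 <= j)%N -> (2 <= k)%N ->
  i != j -> i != k -> j != k -> C i j i j = C i k i k.
Proof.
move=> Hi Hj Hk Hij Hik Hjk.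
have Hji : j != i by rewrite eq_sym.
have Hki : k != i by rewrite eq_sym.
have Hkj : k != j by rewrite eq_sym.
rewrite (rot_inv Hj Hk Hjk); fixes; lra.
Qed.

Lemma V3 (t i j k : 'I_d) : (t < 2)%N -> (2 <= i)%N -> (2 <= j)%N -> (2 <= k)%N ->
  i != j -> i != k -> j != k -> C t i j k = 0.
Proof.
move=> Ht Hi Hj Hk Hij Hik Hjk.
have /andP[H1 H2] := lt2_neq Ht Hi; have /andP[H3 H4] := lt2_neq Ht Hj.
have /andP[H5 H6] := lt2_neq Ht Hk.
have Hji : j != i by rewrite eq_sym.
have Hki : k != i by rewrite eq_sym.
have Hkj : k != j by rewrite eq_sym.
have E1 := rot_inv Hi Hj Hij t i j k; fixes.
have E2 := rot_inv Hi Hk Hik t i j k; fixes.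
move: E1 E2; fixes => E1 E2.
have := CB t i j k; rewrite (CA2 t j k i) (CA2 t k i j); lra.
Qed.

Lemma V4 (i j k l : 'I_d) : (2 <= i)%N -> (2 <= j)%N -> (2 <= k)%N -> (2 <= l)%N ->
  i != j -> i != k -> i != l -> j != k -> j != l -> k != l -> C i j k l = 0.
Proof.
move=> Hi Hj Hk Hl Hij Hik Hil Hjk Hjl Hkl.
have Hji : j != i by rewrite eq_sym.
have Hki : k != i by rewrite eq_sym.
have Hkj : k != j by rewrite eq_sym.
have Hli : l != i by rewrite eq_sym.
have Hlj : l != j by rewrite eq_sym.
have Hlk : l != k by rewrite eq_sym.
have E1 := rot_inv Hj Hk Hjk i j k l.
have E2 := rot_inv Hj Hl Hjl i j k l.
move: E1 E2; fixes => E1 E2.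
have := CB i j k l; rewrite (CA2 i k l j) (CA2 i l j k); lra.
Qed.


Lemma sum_const_n (F : 'I_n -> R) x : (forall j, F j = x) -> \sum_j F j = n%:R * x.
Proof.
move=> H; under eq_bigr => j _ do rewrite H.
by rewrite sumr_const card_ord mulr_natl.
Qed.

Lemma tt_eq (t t' : 'I_d) (i j : 'I_n) : (t < 2)%N -> (t' < 2)%N ->
  C t (sp i) t' (sp i) = C t (sp j) t' (sp j).
Proof.
move=> Ht Ht'; case: (i =P j) => [->//|/eqP Hij].
by apply: rot_tt => //; rewrite sp_eq.
Qed.

Lemma Z_tt (t : 'I_d) (i : 'I_n) : (t < 2)%N -> C t (sp i) t (sp i) = 0.
Proof.
move=> Ht; have := trace_eq t t.
rewrite (sum_const_n (x := C t (sp i) t (sp i))); last by move=> j; apply: tt_eq.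
have -> : C t o0 t o1 + C t o1 t o0 = 0.
  case: (split_d t) => [->|->|[j Hj]]; last by move: Ht; rewrite Hj.
  - by rewrite C_aa C_cc addr0.
  - by rewrite C_aa C_cc addr0.
rewrite add0r => /eqP; rewrite mulf_eq0 => /orP[|/eqP//].
rewrite pnatr_eq0 => /eqP n0; have := ltn_ord i; by rewrite {2}n0.
Qed.

Lemma ijij_A (i j l : 'I_d) : (2 <= i)%N -> (2 <= j)%N -> (2 <= l)%N ->
  i != j -> i != l -> C i j i j = C i l i l.
Proof.
move=> Hi Hj Hl Hij Hil; case: (j =P l) => [->//|/eqP Hjl].
exact: rot_ijij.
Qed.

Lemma ijij_sym (i j : 'I_d) : C i j i j = C j i j i.
Proof. by rewrite CA1 CA2 opprK. Qed.

Lemma ijij_eq (i j k l : 'I_d) : (2 <= i)%N -> (2 <= j)%N -> (2 <= k)%N -> (2 <= l)%N ->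
  i != j -> k != l -> C i j i j = C k l k l.
Proof.
move=> Hi Hj Hk Hl Hij Hkl.
case: (k =P i) => [Eki|/eqP Hki]; first by subst k; exact: ijij_A.
case: (k =P j) => [Ekj|/eqP Hkj].
  subst k; rewrite ijij_sym; apply: ijij_A => //; by rewrite eq_sym.
have Hji : j != i by rewrite eq_sym.
have Hjk : j != k by rewrite eq_sym.
rewrite ijij_sym (@ijij_A j i k) // ijij_sym; exact: ijij_A.
Qed.


Lemma sum_pt (j : 'I_n) (x : R) : \sum_(i < n) (if i == j then x else 0) = x.
Proof.
rewrite (bigD1 j) //= eqxx big1 ?addr0 // => i /negbTE ->; by [].
Qed.

Lemma trace01 (i : 'I_n) :
  - C o0 o1 o0 o1 + n%:R * C o0 (sp i) o1 (sp i) = 0.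
Proof.
have := trace_eq o0 o1; rewrite C_aa add0r (CA2 o0 o1 o1 o0).
rewrite (sum_const_n (x := C o0 (sp i) o1 (sp i))) //.
by move=> j; apply: tt_eq.
Qed.

Lemma inner_sum (j i0 i1 : 'I_n) : i0 != i1 ->
  \sum_(i < n) C (sp j) (sp i) (sp j) (sp i) =
  (n%:R - 1) * C (sp i0) (sp i1) (sp i0) (sp i1).
Proof.
move=> H01; set g := C (sp i0) (sp i1) (sp i0) (sp i1).
transitivity (\sum_(i < n) (g - if i == j then g else 0)).
  apply: eq_bigr => i _; case: (i =P j) => [->|/eqP Hij].
    by rewrite C_aa subrr.
  rewrite subr0; apply: ijij_eq => //; rewrite sp_eq // eq_sym //.
by rewrite sumrB sum_pt (sum_const_n (x := g)) // mulrBl mul1r.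
Qed.

Lemma trace_jj (j i0 i1 : 'I_n) : i0 != i1 ->
  2 * C o0 (sp j) o1 (sp j) + (n%:R - 1) * C (sp i0) (sp i1) (sp i0) (sp i1) = 0.
Proof.
move=> H01; have := trace_eq (sp j) (sp j).
rewrite (inner_sum j H01) (CP (sp j) o1 (sp j) o0) (CA1 (sp j) o0) (CA2 o0 (sp j)) opprK.
rewrite mulr2n; lra.
Qed.

Lemma Rbar_val (i0 i1 : 'I_n) : i0 != i1 ->
  Rbar C = n%:R * ((n%:R - 1) * C (sp i0) (sp i1) (sp i0) (sp i1)).
Proof.
move=> H01; rewrite Rbar_sp; apply: sum_const_n => i.
rewrite -(inner_sum i H01); apply: eq_bigr => k _; exact: ijij_sym.
Qed.


Ltac symneq :=
  repeat match goal with
  | H : is_true (?x != ?y) |- _ =>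
      lazymatch goal with
      | _ : is_true (y != x) |- _ => fail
      | _ => have: y != x by rewrite eq_sym; exact H
      end; move=> ?
  end.
Ltac neqs :=
  repeat match goal with
  | H : is_true (?x != ?y) |- context [?x == ?y] => rewrite (negbTE H)
  end.
Ltac kill K M :=
  symneq; apply: (par_kill (k := sp K) (m := sp M)); [by []|by []|by rewrite sp_eq|];
  rewrite /par ?sp_eq ?o0_sp ?o1_sp ?sp_o0 ?sp_o1 ?eqxx; neqs; simpl; lra.

Lemma lt_neq (i j : 'I_n) : (i < j)%N -> i != j.
Proof. by move=> H; apply/eqP=> E; move: H; rewrite E ltnn. Qed.

Lemma offdiag (a b c e : 'I_d) : (2 < n)%N -> (a < b)%N -> (c < e)%N ->
  (a, b) != (c, e) -> C (rho a) (rho b) c e = 0.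
Proof.
move=> Hn Hab Hce.
case: (classify Hab) => [[-> ->]|[i [-> ->]]|[i [-> ->]]|[i [j [Hij -> ->]]]];
case: (classify Hce) => [[-> ->]|[k [-> ->]]|[k [-> ->]]|[k [l [Hkl -> ->]]]];
rewrite ?rho0 ?rho1 ?rho_sp xpair_eqE ?eqxx ?sp_eq ?o0_sp ?o1_sp ?sp_o0 ?sp_o1 /= => Hne.
- by [].
- by have [y /andP[Hy1 Hy2]] := fresh2 k k Hn; kill k y.
- by have [y /andP[Hy1 Hy2]] := fresh2 k k Hn; kill k y.
- have Hkl' := lt_neq Hkl.
  by have [y /andP[Hy1 Hy2]] := fresh2 k l Hn; kill k y.
- by have [y /andP[Hy1 Hy2]] := fresh2 i i Hn; kill i y.
- by have [y /andP[Hy1 Hy2]] := fresh2 i k Hn; kill i y.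
- case: (i =P k) => [<-|/eqP Hik]; first exact: Z_tt.
  by have [y /andP[Hy1 Hy2]] := fresh2 i k Hn; kill i y.
- have Hkl' := lt_neq Hkl.
  case: (i =P k) => [Eik|/eqP Hik]; first by subst k; kill l i.
  case: (i =P l) => [Eil|/eqP Hil]; first by subst l; kill k i.
  apply: V3 => //; rewrite sp_eq //.
- by have [y /andP[Hy1 Hy2]] := fresh2 i i Hn; kill i y.
- case: (i =P k) => [<-|/eqP Hik]; first exact: Z_tt.
  by have [y /andP[Hy1 Hy2]] := fresh2 i k Hn; kill i y.
- by have [y /andP[Hy1 Hy2]] := fresh2 i k Hn; kill i y.
- have Hkl' := lt_neq Hkl.
  case: (i =P k) => [Eik|/eqP Hik]; first by subst k; kill l i.
  case: (i =P l) => [Eil|/eqP Hil]; first by subst l; kill k i.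
  apply: V3 => //; rewrite sp_eq //.
- have Hij' := lt_neq Hij.
  by have [y /andP[Hy1 Hy2]] := fresh2 i j Hn; kill i y.
- have Hij' := lt_neq Hij.
  case: (k =P i) => [Eik|/eqP Hik]; first by subst k; kill j i.
  case: (k =P j) => [Ejk|/eqP Hjk]; first by subst k; kill i j.
  rewrite CP; apply: V3 => //; rewrite sp_eq // eq_sym //.
- have Hij' := lt_neq Hij.
  case: (k =P i) => [Eik|/eqP Hik]; first by subst k; kill j i.
  case: (k =P j) => [Ejk|/eqP Hjk]; first by subst k; kill i j.
  rewrite CP; apply: V3 => //; rewrite sp_eq // eq_sym //.
- have Hij' := lt_neq Hij; have Hkl' := lt_neq Hkl.
  case: (i =P k) => [Eik|/eqP Hik].
    subst k; have Hjl : j != l by move: Hne; rewrite eqxx.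
    kill j i.
  case: (i =P l) => [Eil|/eqP Hil].
    subst l; have Hjk : j != k by apply/eqP=> E; move: Hkl Hij; rewrite E; lia.
    kill j i.
  case: (j =P k) => [Ejk|/eqP Hjk].
    subst k; kill i j.
  case: (j =P l) => [Ejl|/eqP Hjl].
    subst l; kill i j.
  apply: V4 => //; rewrite sp_eq //.
Qed.

End Gen.
Arguments o0 {n}.
Arguments o1 {n}.


Lemma lt_neq_gen m (i j : 'I_m) : (i < j)%N -> i != j.
Proof. by move=> H; apply/eqP=> E; move: H; rewrite E ltnn. Qed.

Section Combi.
Variable T : comNzRingType.

Lemma prod_const_ord n (c : T) : \prod_(i < n) c = c ^+ n.
Proof. elim: n => [|n IH]; first by rewrite big_ord0. by rewrite big_ord_recr IH exprSr. Qed.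

Lemma pairs_prod n (c : T) :
  \prod_(i < n) \prod_(j < n | (i < j)%N) c = c ^+ 'C(n, 2).
Proof.
elim: n => [|n IH]; first by rewrite big_ord0.
rewrite big_ord_recl binS bin1 addnC exprD; congr (_ * _).
  by rewrite big_mkcond big_ord_recl /= mul1r prod_const_ord.
rewrite -IH; apply: eq_bigr => i _.
by rewrite big_mkcond big_ord_recl /= mul1r [RHS]big_mkcond.
Qed.
End Combi.

Section Part2.
Variables (R : rcfType) (n : nat).
Local Notation d := n.+2.

Lemma prod_biv (F : 'I_d * 'I_d -> {poly R}) :
  \prod_(p : biv d) F (val p) = \prod_(a < d) \prod_(b < d | (a < b)%N) F (a, b).
Proof.
rewrite pair_big_dep /=.
rewrite (reindex_omap (val : biv d -> 'I_d * 'I_d) insub) /=; last first.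
  by move=> p Hp; rewrite insubT.
symmetry; apply: eq_big => [p|p _]; first by rewrite (valP p) valK eqxx.
by case: (sval p).
Qed.

Lemma char_enum (M : 'M[R]_#|{: biv d}|) (G : biv d -> {poly R}) :
  (forall i, G (enum_val i) = 'X - (M i i)%:P) ->
  is_trig_mx M -> char_poly M = \prod_(p : biv d) G p.
Proof.
move=> HG Ht; rewrite char_poly_trig // (big_enum_val (A := {: biv d})) /=.
by apply: eq_bigr => i _; rewrite HG.
Qed.
End Part2.

Lemma lt00 n : (@o0 n < @o0 n)%N = false. Proof. by []. Qed.
Lemma lt01 n : (@o0 n < @o1 n)%N = true. Proof. by []. Qed.
Lemma lt0s n (i : 'I_n) : (@o0 n < sp i)%N = true. Proof. by []. Qed.
Lemma lt10 n : (@o1 n < @o0 n)%N = false. Proof. by []. Qed.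
Lemma lt11 n : (@o1 n < @o1 n)%N = false. Proof. by []. Qed.
Lemma lt1s n (i : 'I_n) : (@o1 n < sp i)%N = true. Proof. by []. Qed.
Lemma lts0 n (i : 'I_n) : (sp i < @o0 n)%N = false. Proof. by []. Qed.
Lemma lts1 n (i : 'I_n) : (sp i < @o1 n)%N = false. Proof. by []. Qed.

Section Part2b.
Variables (R : rcfType) (n : nat).
Local Notation d := n.+2.
Variable C : 'I_d -> 'I_d -> 'I_d -> 'I_d -> R.
Hypothesis HC : is_weyl C.
Hypothesis HI : spin_invariant C.
Hypothesis Hn : (2 < n)%N.

Lemma prod_dP (F : 'I_d -> {poly R}) :
  \prod_(b < d) F b = F o0 * F o1 * \prod_(i < n) F (sp i).
Proof.
rewrite !big_ord_recl mulrA; congr (_ * _ * _).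
by congr F; apply: val_inj.
Qed.

Lemma L0 (F : 'I_d -> {poly R}) :
  \prod_(b < d | (@o0 n < b)%N) F b = F o1 * \prod_(i < n) F (sp i).
Proof. by rewrite big_mkcond prod_dP /= mul1r. Qed.
Lemma L1 (F : 'I_d -> {poly R}) :
  \prod_(b < d | (@o1 n < b)%N) F b = \prod_(i < n) F (sp i).
Proof. by rewrite big_mkcond prod_dP /= !mul1r. Qed.
Lemma Ls (i : 'I_n) (F : 'I_d -> {poly R}) :
  \prod_(b < d | (sp i < b)%N) F b = \prod_(j < n | (i < j)%N) F (sp j).
Proof. by rewrite big_mkcond prod_dP /= !mul1r [RHS]big_mkcond. Qed.

Lemma is_trig_weyl : is_trig_mx (weyl_op C).
Proof.
apply/is_trig_mxP => i j Hij; rewrite mxE weyl_entry_rho //.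
have H : val (enum_val i) != val (enum_val j).
  rewrite val_eqE (inj_eq enum_val_inj); exact: lt_neq_gen.
apply: offdiag => //.
- by case: (enum_val i).
- by case: (enum_val j).
Qed.

Lemma part2_prod :
  let i0 : 'I_n := Ordinal (ltn_trans (isT : 0 < 2)%N Hn) in
  let i1 : 'I_n := Ordinal (ltn_trans (isT : 1 < 2)%N Hn) in
  char_poly (weyl_op C) =
  ('X - (- C o0 o1 o0 o1)%:P) * ('X - (C o0 (sp i0) o1 (sp i0))%:P) ^+ n
  * ('X - (C o0 (sp i0) o1 (sp i0))%:P) ^+ n
  * ('X - (C (sp i0) (sp i1) (sp i0) (sp i1))%:P) ^+ 'C(n, 2).
Proof.
move=> i0 i1.
have H01 : i0 != i1 by [].
pose G (p : 'I_d * 'I_d) := 'X - (C (rho p.1) (rho p.2) p.1 p.2)%:P.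
rewrite (@char_enum _ _ _ (fun p => G (val p))); first last.
- exact: is_trig_weyl.
- by move=> i; rewrite mxE weyl_entry_rho.
rewrite prod_biv prod_dP L0 L1.
under [X in _ * X]eq_bigr => i _ do rewrite Ls.
rewrite /G /= !rho0 !rho1.
set b0 := C o0 (sp i0) o1 (sp i0).
set g0 := C (sp i0) (sp i1) (sp i0) (sp i1).
rewrite [X in _ * X * _ * _](eq_bigr (fun _ => 'X - b0%:P)); last first.
  by move=> i _; rewrite rho_sp (CP HC) (tt_eq HI i i0).
rewrite [X in _ * X * _](eq_bigr (fun _ => 'X - b0%:P)); last first.
  by move=> i _; rewrite rho_sp (tt_eq HI i i0).
rewrite [X in _ * X](eq_bigr (fun i : 'I_n => \prod_(j < n | (i < j)%N) ('X - g0%:P))); last first.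
  move=> i _; apply: eq_bigr => j Hij; rewrite !rho_sp.
  by rewrite (@ijij_eq _ _ _ HC HI (sp i) (sp j) (sp i0) (sp i1)) // sp_neq // lt_neq_gen.
by rewrite pairs_prod !prod_const_ord (CA1 HC).
Qed.


Lemma part2 :
  char_poly (weyl_op C)
  = ('X - (- Rbar C / (2 * (d - 2)%:R))%:P) ^+ (2 * (d - 2))
    * ('X - (Rbar C / 2)%:P)
    * ('X - (Rbar C / ((d - 2) * (d - 3))%:R)%:P) ^+ ((d - 2) * (d - 3) %/ 2).
Proof.
have := part2_prod; cbv zeta.
set i0 : 'I_n := Ordinal _; set i1 : 'I_n := Ordinal _ => ->.
have H01 : i0 != i1 by [].
have E2 : (n.+2 - 2 = n)%N by lia.
have E3 : (n.+2 - 3 = n.-1)%N by lia.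
rewrite E2 E3 divn2 -bin2.
set al := C o0 o1 o0 o1.
set be := C o0 (sp i0) o1 (sp i0).
set ga := C (sp i0) (sp i1) (sp i0) (sp i1).
have T1 := trace01 HC HI i0; rewrite -/al -/be in T1.
have T2 := trace_jj HC HI i0 H01; rewrite -/be -/ga in T2.
have RB := Rbar_val HC HI H01; rewrite -/ga in RB.
have n0 : (n%:R : R) != 0 by rewrite pnatr_eq0; lia.
have n1 : (n.-1%:R : R) = n%:R - 1.
  by rewrite -[in RHS](prednK (_ : 0 < n)%N) ?mulrSr ?addrK //; lia.
have n10 : (n%:R - 1 : R) != 0.
  rewrite -n1 pnatr_eq0; lia.
have V1 : - Rbar C / (2 * n%:R) = be.
  rewrite RB; have -> : (n%:R - 1) * ga = - (2 * be) by lra.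
  by field.
have V2 : Rbar C / 2 = - al.
  rewrite RB; have -> : (n%:R - 1) * ga = - (2 * be) by lra.
  have -> : al = n%:R * be by lra.
  by field.
have V3 : Rbar C / (n * n.-1)%:R = ga.
  rewrite RB natrM n1 mulrA [_ * ga]mulrC mulfK // mulf_neq0 //.
rewrite V1 V2 V3 mul2n -addnn exprD.
ring.
Qed.

End Part2b.

Section CharGen.
Variable T : comNzRingType.

Lemma char_reindex m n (e : m = n) (A : 'M[T]_n) (h : 'I_m -> 'I_n) :
  injective h -> char_poly (\matrix_(i, j) A (h i) (h j)) = char_poly A.
Proof.
case: n / e A h => A h hinj.
pose s : 'S_m := perm hinj.
have -> : \matrix_(i, j) A (h i) (h j) = row_perm s (col_perm s A).
  by apply/matrixP => i j; rewrite !mxE !permE.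
rewrite /char_poly.
have -> : char_poly_mx (row_perm s (col_perm s A)) =
          row_perm s (col_perm s (char_poly_mx A)).
  apply/matrixP => i j; by rewrite !mxE (inj_eq perm_inj).
rewrite row_permE col_permE !det_mulmx !det_perm odd_permV.
by rewrite mulrC -mulrA -expr2 sqrr_sign mulr1.
Qed.

Lemma char_block m1 m2 (A : 'M[T]_m1) (B : 'M[T]_m2) :
  char_poly (block_mx A 0 0 B) = char_poly A * char_poly B.
Proof. by rewrite /char_poly char_block_diag_mx det_ublock. Qed.

Lemma char_split m1 m2 (A : 'M[T]_(m1 + m2)) :
  ursubmx A = 0 -> dlsubmx A = 0 ->
  char_poly A = char_poly (ulsubmx A) * char_poly (drsubmx A).
Proof.
move=> Hur Hdl; rewrite -[A in LHS]submxK Hur Hdl; exact: char_block.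
Qed.

Lemma char2 (A : 'M[T]_2) :
  char_poly A = ('X - (A 0 0)%:P) * ('X - (A 1 1)%:P) - (A 0 1 * A 1 0)%:P.
Proof.
rewrite /char_poly (expand_det_row _ 0) !big_ord_recl big_ord0 addr0.
rewrite /cofactor !det_mx11 !mxE /=.
have E1 : lift (0 : 'I_2) (0 : 'I_1) = 1 by apply: val_inj.
have E2 : lift (lift (ord0 : 'I_2) (ord0 : 'I_1)) (0 : 'I_1) = 0 by apply: val_inj.
have E3 : lift (ord0 : 'I_2) (0 : 'I_1) = 1 by apply: val_inj.
have E4 : lift (ord0 : 'I_2) (ord0 : 'I_1) = 1 by apply: val_inj.
have E5 : lift (1 : 'I_2) (0 : 'I_1) = 0 by apply: val_inj.
rewrite ?E1 ?E2 ?E3 ?E4 ?E5 /bump /= polyCM.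
have -> : (ord0 : 'I_2) = 0 by [].
rewrite !mulr1n !mulr0n expr0 expr1 !add0r mul1r; ring.
Qed.
End CharGen.

Definition j0 : 'I_2 := @Ordinal 2 0 isT.
Definition j1 : 'I_2 := @Ordinal 2 1 isT.
Definition bP (p : 'I_4 * 'I_4) := (p.1 < p.2)%N.
Definition b01 : biv 4 := @exist _ bP (o0, o1) isT.
Definition b23 : biv 4 := @exist _ bP (sp j0, sp j1) isT.
Definition b02 : biv 4 := @exist _ bP (o0, sp j0) isT.
Definition b03 : biv 4 := @exist _ bP (o0, sp j1) isT.
Definition b12 : biv 4 := @exist _ bP (o1, sp j0) isT.
Definition b13 : biv 4 := @exist _ bP (o1, sp j1) isT.

Definition f6 (i : 'I_(2 + (2 + 2))) : biv 4 :=
  match nat_of_ord i with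
  | 0 => b01 | 1 => b23 | 2 => b02 | 3 => b03 | 4 => b12 | _ => b13 end.

Definition O6 k (H : (k < 2 + (2 + 2))%N) : 'I_(2 + (2 + 2)) := Ordinal H.

Definition g6 (p : biv 4) : 'I_(2 + (2 + 2)) :=
  match nat_of_ord (val p).1, nat_of_ord (val p).2 with
  | 0, 1 => @O6 0 isT | 0, 2 => @O6 2 isT | 0, 3 => @O6 3 isT
  | 1, 2 => @O6 4 isT | 1, 3 => @O6 5 isT | _, _ => @O6 1 isT end.

Lemma f6K : cancel f6 g6.
Proof. by case=> [[|[|[|[|[|[|i]]]]]] Hi] //; apply: val_inj. Qed.

Lemma g6K : cancel g6 f6.
Proof.
case=> [[[[|[|[|[|a]]]] Ha] [[|[|[|[|b]]]] Hb]] Hab] //; apply: val_inj => /=; congr pair; exact: val_inj.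
Qed.

Lemma f6_bij : bijective f6.
Proof. by exists g6; [exact: f6K | exact: g6K]. Qed.

Lemma card_biv4 : (2 + (2 + 2) = #|{: biv 4}|)%N.
Proof. by rewrite -(bij_eq_card f6_bij) card_ord. Qed.


Section FinalId.
Variable F : fieldType.

Lemma quad_I (I b k : F) : I ^+ 2 = -1 ->
  ('X - (b - I * k)%:P) * ('X - (b + I * k)%:P) = ('X - b%:P) * ('X - b%:P) - (- k * k)%:P.
Proof.
move=> HI2.
have -> : ('X - (b - I * k)%:P) * ('X - (b + I * k)%:P) =
  ('X - b%:P) * ('X - b%:P) - (I ^+ 2)%:P * (k%:P * k%:P).
  rewrite !polyCB !polyCD !polyCM; ring.
rewrite HI2 !polyCM polyCN polyC1; ring.
Qed.

Lemma final_id (I b k : F) : I ^+ 2 = -1 -> (2 : F) != 0 ->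
  let Rb := - (4 * b) in let A := 2 * k in
  (('X - (- (2 * b))%:P) * ('X - (- (2 * b))%:P) - (- (2 * k) * (2 * k))%:P) *
  ((('X - b%:P) * ('X - b%:P) - (- k * k)%:P) *
   (('X - b%:P) * ('X - b%:P) - (k * - k)%:P))
  = ('X - (- (Rb + 2 * I * A) / 4)%:P) ^+ 2
    * ('X - (- (Rb - 2 * I * A) / 4)%:P) ^+ 2
    * ('X - ((Rb + 2 * I * A) / 2)%:P)
    * ('X - ((Rb - 2 * I * A) / 2)%:P).
Proof.
move=> HI2 H2 Rb A.
have E22 : (4 : F) = 2 * 2 by ring.
have H4 : (4 : F) != 0 by rewrite E22 mulf_neq0.
have E1 : - (Rb + 2 * I * A) / 4 = b - I * k by rewrite /Rb /A; field.
have E2 : - (Rb - 2 * I * A) / 4 = b + I * k by rewrite /Rb /A; field.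
have E3 : (Rb + 2 * I * A) / 2 = - (2 * b) + I * (2 * k) by rewrite /Rb /A; field.
have E4 : (Rb - 2 * I * A) / 2 = - (2 * b) - I * (2 * k) by rewrite /Rb /A; field.
rewrite E1 E2 E3 E4.
have Q1 := quad_I b k HI2.
have Q2 := quad_I (- (2 * b)) (2 * k) HI2.
have -> : (k * - k) = - k * k by ring.
rewrite -Q1 -Q2; ring.
Qed.
End FinalId.

Section Part1.
Variable R : rcfType.
Variable C : 'I_4 -> 'I_4 -> 'I_4 -> 'I_4 -> R.
Hypothesis HC : is_weyl C.
Hypothesis HI : spin_invariant C.

Definition M6 : 'M[R]_(2 + (2 + 2)) := \matrix_(i, j) weyl_entry C (f6 i) (f6 j).

Lemma weyl_M6 : char_poly (weyl_op C) = char_poly M6.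
Proof.
rewrite -(@char_reindex _ _ _ card_biv4 _ (fun i => enum_rank (f6 i))).
  by congr char_poly; apply/matrixP => i j; rewrite !mxE !enum_rankK.
move=> i j /enum_rank_inj; exact: (bij_inj f6_bij).
Qed.

Lemma M6_ur : ursubmx M6 = 0.
Proof.
apply/matrixP => i j; rewrite !mxE.
case: i => [[|[|i]] Hi] //; case: j => [[|[|[|[|j]]]] Hj] //;
  rewrite (weyl_entry_rho HC) /= ?rho0 ?rho1 ?rho_sp;
  apply: (par_kill HI (k := sp j0) (m := sp j1)) => //; rewrite /par /=; lra.
Qed.

Lemma M6_dl : dlsubmx M6 = 0.
Proof.
apply/matrixP => i j; rewrite !mxE.
case: i => [[|[|[|[|i]]]] Hi] //; case: j => [[|[|j]] Hj] //;
  rewrite (weyl_entry_rho HC) /= ?rho0 ?rho1 ?rho_sp;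
  apply: (par_kill HI (k := sp j0) (m := sp j1)) => //; rewrite /par /=; lra.
Qed.

Lemma M4_ur : ursubmx (drsubmx M6 : 'M_(2 + 2)) = 0.
Proof.
apply/matrixP => i j; rewrite !mxE.
case: i => [[|[|i]] Hi] //; case: j => [[|[|j]] Hj] //;
  rewrite (weyl_entry_rho HC) /= ?rho0 ?rho1 ?rho_sp;
  first [exact: (Z_tt HC HI) | by apply: (rot_tt0 HC HI)].
Qed.

Lemma M4_dl : dlsubmx (drsubmx M6 : 'M_(2 + 2)) = 0.
Proof.
apply/matrixP => i j; rewrite !mxE.
case: i => [[|[|i]] Hi] //; case: j => [[|[|j]] Hj] //;
  rewrite (weyl_entry_rho HC) /= ?rho0 ?rho1 ?rho_sp;
  first [exact: (Z_tt HC HI) | by apply: (rot_tt0 HC HI)].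
Qed.

Lemma part1_R :
  char_poly (weyl_op C) =
  (char_poly (ulsubmx M6)) *
  (char_poly (ulsubmx (drsubmx M6 : 'M_(2 + 2))) * char_poly (drsubmx (drsubmx M6 : 'M_(2 + 2)))).
Proof.
by rewrite weyl_M6 (char_split M6_ur M6_dl) (char_split M4_ur M4_dl).
Qed.

Lemma part1_R2 :
  char_poly (weyl_op C) =
  (('X - (C o1 o0 o0 o1)%:P) * ('X - (C (sp j0) (sp j1) (sp j0) (sp j1))%:P)
     - (C o1 o0 (sp j0) (sp j1) * C (sp j0) (sp j1) o0 o1)%:P) *
  ((('X - (C o1 (sp j0) o0 (sp j0))%:P) * ('X - (C o1 (sp j1) o0 (sp j1))%:P)
     - (C o1 (sp j0) o0 (sp j1) * C o1 (sp j1) o0 (sp j0))%:P) *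
   (('X - (C o0 (sp j0) o1 (sp j0))%:P) * ('X - (C o0 (sp j1) o1 (sp j1))%:P)
     - (C o0 (sp j0) o1 (sp j1) * C o0 (sp j1) o1 (sp j0))%:P)).
Proof.
by rewrite part1_R !char2 !mxE !(weyl_entry_rho HC) /= !rho0 !rho1 !rho_sp.
Qed.


Lemma part1_vals :
  let b := C o0 (sp j0) o1 (sp j0) in
  let kk := C o0 (sp j0) o1 (sp j1) in
  (C o1 o0 o0 o1 = - (2 * b)) /\ (C (sp j0) (sp j1) (sp j0) (sp j1) = - (2 * b)) /\
  (C o1 o0 (sp j0) (sp j1) = - (2 * kk)) /\ (C (sp j0) (sp j1) o0 o1 = 2 * kk) /\
  (C o1 (sp j0) o0 (sp j0) = b) /\ (C o1 (sp j1) o0 (sp j1) = b) /\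
  (C o0 (sp j1) o1 (sp j1) = b) /\
  (C o1 (sp j0) o0 (sp j1) = - kk) /\ (C o1 (sp j1) o0 (sp j0) = kk) /\
  (C o0 (sp j1) o1 (sp j0) = - kk) /\ (Rbar C = - (4 * b)) /\
  (C ord0 (inord 1) (inord 2) (inord 3) = 2 * kk).
Proof.
cbv zeta.
have H01 : j0 != j1 by [].
have T1 := trace01 HC HI j0.
have T2 := trace_jj HC HI j0 H01.
have RB := Rbar_val HC HI H01.
have Tb : C o0 (sp j1) o1 (sp j1) = C o0 (sp j0) o1 (sp j0) by rewrite (tt_eq HI j1 j0).
have Rk : C o0 (sp j1) o1 (sp j0) = - C o0 (sp j0) o1 (sp j1).
  have := rot_inv HI (k := sp j0) (m := sp j1) isT isT isT o0 (sp j0) o1 (sp j1).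
  rewrite tpermL tpermR !tpermD // /sgnm /= => E; rewrite E; lra.
have BI := CB HC o0 o1 (sp j0) (sp j1).
rewrite (CA2 HC o0 (sp j0) (sp j1) o1) Rk in BI.
have E2 : (2%:R : R) = 2 by [].
split; [|split; [|split; [|split; [|split; [|split; [|split; [|split; [|split; [|split; [|split]]]]]]]]]].
- rewrite (CA1 HC); lra.
- lra.
- rewrite (CA1 HC); lra.
- rewrite (CP HC); lra.
- by rewrite (CP HC).
- by rewrite (CP HC) Tb.
- exact: Tb.
- by rewrite (CP HC) Rk.
- by rewrite (CP HC).
- exact: Rk.
- rewrite RB; lra.
- have -> : (inord 1 : 'I_4) = o1 by apply: val_inj; rewrite /= inordK.
  have -> : (inord 2 : 'I_4) = sp j0 by apply: val_inj; rewrite /= inordK.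
  have -> : (inord 3 : 'I_4) = sp j1 by apply: val_inj; rewrite /= inordK.
  have -> : (ord0 : 'I_4) = o0 by [].
  lra.
Qed.


Lemma part1 :
     let Rb := (Rbar C)%:C%C in
     let A := (C ord0 (inord 1) (inord 2) (inord 3))%:C%C in
     let I := 'i%C in
     char_poly (map_mx (fun x => x%:C%C) (weyl_op C))
     = ('X - (- (Rb + 2 * I * A) / 4)%:P) ^+ 2
       * ('X - (- (Rb - 2 * I * A) / 4)%:P) ^+ 2
       * ('X - ((Rb + 2 * I * A) / 2)%:P)
       * ('X - ((Rb - 2 * I * A) / 2)%:P).
Proof.
have := part1_vals; cbv zeta.
move=> [V1 [V2 [V3 [V4 [V5 [V6 [V7 [V8 [V9 [V10 [V11 V12]]]]]]]]]]].
rewrite -(map_char_poly (real_complex R)) part1_R2 V1 V2 V3 V4 V5 V6 V7 V8 V9 V10 V11 V12.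
move: (C o0 (sp j0) o1 (sp j0)) (C o0 (sp j0) o1 (sp j1)) => b k.
have H2 : (2 : R[i]) != 0 by rewrite pnatr_eq0.
have FI := final_id (b%:C)%C (k%:C)%C (sqr_i R) H2; cbv zeta in FI.
have ERb : ((- (4 * b))%:C)%C = - (4 * b%:C%C) :> R[i].
  by rewrite rmorphN rmorphM rmorph_nat.
have EA : ((2 * k)%:C)%C = 2 * k%:C%C :> R[i].
  by rewrite rmorphM rmorph_nat.
rewrite ERb EA -FI.
rewrite !(rmorphM, rmorphB, rmorphN, map_polyX, map_polyC) /=.
rewrite !(map_polyX (real_complex R)) !(map_polyC (real_complex R)) /=.
have E2c : ((2 : R)%:C)%C = 2 :> R[i] by rewrite rmorph_nat.
by rewrite E2c.
Qed.

End Part1.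

Theorem mainTheorem2 (R : rcfType) :
  (* (i) d = 4 : A_34 = C_{0134} is C 0 1 2 3 in our indexing *)
  (forall C : 'I_4 -> 'I_4 -> 'I_4 -> 'I_4 -> R,
     is_weyl C -> spin_invariant C ->
     let Rb := (Rbar C)%:C%C in
     let A := (C ord0 (inord 1) (inord 2) (inord 3))%:C%C in
     let I := 'i%C in
     char_poly (map_mx (fun x => x%:C%C) (weyl_op C))
     = ('X - (- (Rb + 2 * I * A) / 4)%:P) ^+ 2
       * ('X - (- (Rb - 2 * I * A) / 4)%:P) ^+ 2
       * ('X - ((Rb + 2 * I * A) / 2)%:P)
       * ('X - ((Rb - 2 * I * A) / 2)%:P)) /\
  (* (ii) d > 4 *)
  (forall (d : nat) (C : 'I_d -> 'I_d -> 'I_d -> 'I_d -> R),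
     (4 < d)%N -> is_weyl C -> spin_invariant C ->
     char_poly (weyl_op C)
     = ('X - (- Rbar C / (2 * (d - 2)%:R))%:P) ^+ (2 * (d - 2))
       * ('X - (Rbar C / 2)%:P)
       * ('X - (Rbar C / ((d - 2) * (d - 3))%:R)%:P) ^+ ((d - 2) * (d - 3) %/ 2)).
Proof.
split.
- move=> C HC HI; exact: (part1 HC HI).
- move=> [|[|n]] C Hd HC HI //.
  have Hn : (2 < n)%N by lia.
  exact: (part2 HC HI Hn).
Qed.
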